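(* Let $I=\{1,\dots,\ell\}$, $J=\{\ell+1,\dots,p\}$, let $h_1,\dots,h_p\colon\mathbb R^n\times\mathbb R^m\to\overline{\mathbb R}$ and $\Gamma(x):=\{y\in\mathbb R^m\mid h_i(x,y)\le0\ (i\in I),\ h_i(x,y)=0\ (i\in J)\}$. Fix $\bar x\in\operatorname{dom}\Gamma$ and $\bar y\in\Gamma(\bar x)$. Assume that $h_1,\dots,h_p$ are continuous and continuously differentiable with respect to $y$ in a neighborhood of $\{\bar x\}\times\Gamma(\bar x)$, and that $h_i(x,\cdot)\colon\mathbb R^m\to\mathbb R$ is continuous for every $x\in\operatorname{dom}\Gamma$ and every $i$. Assume (A1): for each $x\in\mathbb R^n$, the functions $h_i(x,\cdot)$, $i\in I$, are convex and the functions $h_i(x,\cdot)$, $i\in J$, are affine; and (A2): $\Gamma$ is locally bounded at $\bar x$. Suppose there exist a constant $M>0$ and sequences $\{x^k\}\subset\operatorname{dom}\Gamma$, $\{\nu^k\}\subset\mathbb R^m$, $\{y^k\}\subset\mathbb R^m$ with $x^k\to\bar x$, $\nu^k\to\bar y$, $\nu^k\notin\Gamma(x^k)$ and $y^k\in\Pi(\nu^k,\Gamma(x^k))$ for all $k$, such that $\Lambda^M_{\nu^k}(x^k,y^k)\neq\emptyset$ for all sufficiently large $k$. Then $y^k\to\bar y$ and, for all sufficiently large $k$, $$\operatorname{dist}(\nu^k,\Gamma(x^k))\le M\max\{0,\max_{i\in I}h_i(x^k,\nu^k),\max_{i\in J}|h_i(x^k,\nu^k)|\}.$$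
   Context: $\operatorname{dom}\Gamma:=\{x\mid\Gamma(x)\ne\emptyset\}$; $\|\cdot\|$ Euclidean norm; $\operatorname{dist}(\nu,A):=\inf_{z\in A}\|z-\nu\|$; $\Pi(\nu,A):=\operatorname{argmin}\{\|z-\nu\|\mid z\in A\}$. $\Gamma$ is locally bounded at $\bar x$ if there are a bounded set $B$ and a neighborhood $V$ of $\bar x$ with $\Gamma(x)\subset B$ for all $x\in V$. For $x\in\operatorname{dom}\Gamma$, $\nu\notin\Gamma(x)$, $y\in\Pi(\nu,\Gamma(x))$ and $M>0$: $\Lambda_\nu(x,y):=\{\lambda\in\mathbb R^p\mid \frac{y-\nu}{\|y-\nu\|}+\sum_{i=1}^p\lambda_i\nabla_yh_i(x,y)=0,\ \lambda_i\ge0,\ \lambda_ih_i(x,y)=0\ \forall i\in I\}$ and $\Lambda^M_\nu(x,y):=\{\lambda\in\Lambda_\nu(x,y)\mid\sum_{i=1}^p|\lambda_i|\le M\}$. *)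

(* Defs.v *)
From HB Require Import structures.
From mathcomp Require Import all_boot all_order all_algebra.
From mathcomp Require Import all_classical all_reals all_analysis.
Set Implicit Arguments. Unset Strict Implicit. Unset Printing Implicit Defensive.
Import Order.TTheory GRing.Theory Num.Theory.
Import numFieldNormedType.Exports.
Local Open Scope classical_set_scope.
Local Open Scope ring_scope.

Section Defs.
Variable R : realType.

(* Euclidean inner product and Euclidean norm on R^m = 'rV[R]_m
   (the library's norm on 'rV is the max norm, so we define our own). *)
Definition dotv (m : nat) (u v : 'rV[R]_m) : R := \sum_(j < m) u ord0 j * v ord0 j.
Definition enorm (m : nat) (u : 'rV[R]_m) : R := Num.sqrt (dotv u u).

Definition dist_set (m : nat) (nu : 'rV[R]_m) (A : set 'rV[R]_m) : R :=
  inf [set enorm (z - nu) | z in A].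

Definition in_proj (m : nat) (y nu : 'rV[R]_m) (A : set 'rV[R]_m) : Prop :=
  A y /\ forall z, A z -> enorm (y - nu) <= enorm (z - nu).

Definition gradv (m : nat) (f : 'rV[R]_m -> R) (y : 'rV[R]_m) : 'rV[R]_m :=
  \row_(j < m) ('d f y (delta_mx ord0 j : 'rV[R]_m)).

(* the feasible-set map Gamma(x), with I = {i < l}, J = {l <= i < p} *)
Definition Gam (n m p l : nat) (h : 'I_p -> 'rV[R]_n -> 'rV[R]_m -> \bar R)
  (x : 'rV[R]_n) : set 'rV[R]_m :=
  [set y | forall i : 'I_p, ((i < l)%N -> (h i x y <= 0)%E) /\
                            ((l <= i)%N -> h i x y = 0%E)].

Definition domG (n m p l : nat) (h : 'I_p -> 'rV[R]_n -> 'rV[R]_m -> \bar R) :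
  set 'rV[R]_n := [set x | Gam l h x !=set0].

(* convexity of an extended-real-valued function (convex epigraph) *)
Definition econvex (m : nat) (f : 'rV[R]_m -> \bar R) : Prop :=
  forall (y z : 'rV[R]_m) (t a b : R), 0 <= t <= 1 ->
    (f y <= a%:E)%E -> (f z <= b%:E)%E ->
    (f (t *: y + (1 - t) *: z)%R <= (t * a + (1 - t) * b)%R%:E)%E.

Definition eaffine (m : nat) (f : 'rV[R]_m -> \bar R) : Prop :=
  exists (a : 'rV[R]_m) (b : R), forall y, f y = (dotv a y + b)%:E.

Definition Lam (n m p l : nat) (h : 'I_p -> 'rV[R]_n -> 'rV[R]_m -> \bar R)
  (nu : 'rV[R]_m) (x : 'rV[R]_n) (y : 'rV[R]_m) : set ('I_p -> R) :=
  [set lam | (enorm (y - nu))^-1 *: (y - nu)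
              + \sum_(i < p) lam i *: gradv (fun z => fine (h i x z)) y = 0
           /\ forall i : 'I_p, (i < l)%N ->
                0 <= lam i /\ ((lam i)%:E * h i x y = 0)%E].

Definition LamM (n m p l : nat) (h : 'I_p -> 'rV[R]_n -> 'rV[R]_m -> \bar R)
  (M : R) (nu : 'rV[R]_m) (x : 'rV[R]_n) (y : 'rV[R]_m) : set ('I_p -> R) :=
  [set lam | Lam l h nu x y lam /\ \sum_(i < p) `|lam i| <= M].

End Defs.

(* Main.v *)
Require Import Defs.
From HB Require Import structures.
From mathcomp Require Import all_boot all_order all_algebra.
From mathcomp Require Import all_classical all_reals all_analysis.
From mathcomp Require Import ring lra.
Import Order.TTheory GRing.Theory Num.Theory.
Import numFieldNormedType.Exports.
Local Open Scope classical_set_scope.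
Local Open Scope ring_scope.
Section Basics.
Variable R : realType.
Variable m : nat.
Implicit Types u v w : 'rV[R]_m.

Lemma dotvC u v : dotv u v = dotv v u.
Proof. by apply: eq_bigr => j _; rewrite mulrC. Qed.

Lemma dotvDr u v w : dotv u (v + w) = dotv u v + dotv u w.
Proof. by rewrite /dotv -big_split; apply: eq_bigr => j _; rewrite mxE mulrDr. Qed.

Lemma dotvZr (a : R) u v : dotv u (a *: v) = a * dotv u v.
Proof. by rewrite /dotv mulr_sumr; apply: eq_bigr => j _; rewrite mxE mulrCA. Qed.

Lemma dotvZl (a : R) u v : dotv (a *: u) v = a * dotv u v.
Proof. by rewrite dotvC dotvZr dotvC. Qed.

Lemma dotvDl u v w : dotv (v + w) u = dotv v u + dotv w u.
Proof. by rewrite dotvC dotvDr !(dotvC u). Qed.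

Lemma dotvNr u v : dotv u (- v) = - dotv u v.
Proof. by rewrite -scaleN1r dotvZr mulN1r. Qed.

Lemma dotv0l u : dotv 0 u = 0.
Proof. by rewrite /dotv big1 // => j _; rewrite mxE mul0r. Qed.

Lemma dotv_suml (I : finType) (F : I -> 'rV[R]_m) u :
  dotv (\sum_(i : I) F i) u = \sum_(i : I) dotv (F i) u.
Proof.
apply: (big_ind2 (fun a b => dotv a u = b)).
- exact: dotv0l.
- by move=> a b c d <- <-; rewrite dotvDl.
- by [].
Qed.

Lemma dotvv_ge0 u : 0 <= dotv u u.
Proof. by apply: sumr_ge0 => j _; rewrite -expr2 sqr_ge0. Qed.

Lemma enorm_ge0 u : 0 <= enorm u.
Proof. exact: sqrtr_ge0. Qed.

Lemma enorm_sqr u : enorm u ^+ 2 = dotv u u.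
Proof. by rewrite /enorm sqr_sqrtr // dotvv_ge0. Qed.

Lemma dot_unit u : dotv ((enorm u)^-1 *: u) u = enorm u.
Proof.
rewrite dotvZl -enorm_sqr.
have [->|nz] := eqVneq (enorm u) 0; first by rewrite invr0 mul0r.
by rewrite expr2 mulKf.
Qed.

Lemma coord_le_enorm u j : `|u ord0 j| <= enorm u.
Proof.
rewrite -(ger0_norm (enorm_ge0 u)) -ler_sqr ?nnegrE // ?normr_ge0 //.
rewrite !real_normK ?num_real // enorm_sqr /dotv.
rewrite (bigD1 j) //= -expr2 lerDl.
by apply: sumr_ge0 => i _; rewrite -expr2 sqr_ge0.
Qed.

Lemma norm_le_enorm u : `|u| <= enorm u.
Proof.
change (mx_norm u <= enorm u); rewrite mx_normE.
have H : forall i : 'I_1 * 'I_m, `|u i.1 i.2| <= enorm u.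
  by case=> i j; rewrite (ord1 i) coord_le_enorm.
elim/big_ind: _ => //=.
- exact: enorm_ge0.
- by move=> a b Ha Hb; rewrite num_max ge_max Ha Hb.
Qed.
End Basics.
Section Deriv.
Variable R : realType.
Variable m : nat.

Lemma grad_dot (g : 'rV[R]_m -> R) y d : dotv (gradv g y) d = 'd g y d.
Proof.
rewrite {2}(row_sum_delta d) linear_sum /dotv; apply: eq_bigr => j _.
by rewrite linearZ /= mxE mulrC.
Qed.

Lemma diff_dir_le (g : 'rV[R]_m -> R) y d c : differentiable g y ->
  (forall t, 0 < t < 1 -> g (y + t *: d) <= g y + t * c) -> 'd g y d <= c.
Proof.
move=> dg H; rewrite -deriveE //.
have /cvg_ex[L HL] : derivable g y d by exact: diff_derivable.
have HL' : (fun h : R => h^-1 *: ((g \o shift y) (h *: d) - g y)) @ 0^'+ --> L.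
  exact: cvg_dnbhs_at_right.
have -> : 'D_d g y = L by rewrite /derive; exact: cvg_lim.
apply: (cvgr_to_le HL'); near=> t.
have t0 : 0 < t by near: t; exact: nbhs_right_gt.
have t1 : t < 1 by near: t; exact: nbhs_right_lt ltr01.
have := H t; rewrite t0 t1 => /(_ isT) Ht.
rewrite /= [t *: d + y]addrC; change (t^-1 * (g (y + t *: d) - g y) <= c).
by rewrite mulrC ler_pdivrMr // mulrC lerBlDl.
Unshelve. all: by end_near.
Qed.

Lemma diff_dir_ge (g : 'rV[R]_m -> R) y d c : differentiable g y ->
  (forall t, 0 < t < 1 -> g y + t * c <= g (y + t *: d)) -> c <= 'd g y d.
Proof.
move=> dg H; rewrite -deriveE //.
have /cvg_ex[L HL] : derivable g y d by exact: diff_derivable.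
have HL' : (fun h : R => h^-1 *: ((g \o shift y) (h *: d) - g y)) @ 0^'+ --> L.
  exact: cvg_dnbhs_at_right.
have -> : 'D_d g y = L by rewrite /derive; exact: cvg_lim.
apply: (cvgr_to_ge HL'); near=> t.
have t0 : 0 < t by near: t; exact: nbhs_right_gt.
have t1 : t < 1 by near: t; exact: nbhs_right_lt ltr01.
have := H t; rewrite t0 t1 => /(_ isT) Ht.
rewrite /= [t *: d + y]addrC; change (c <= t^-1 * (g (y + t *: d) - g y)).
by rewrite mulrC ler_pdivlMr // mulrC lerBrDl.
Unshelve. all: by end_near.
Qed.
End Deriv.
Section Key.
Variables (R : realType) (n m p l : nat).
Variable h : 'I_p -> 'rV[R]_n -> 'rV[R]_m -> \bar R.

Definition viol (x0 : 'rV[R]_n) (z : 'rV[R]_m) : R :=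
  \big[Num.max/0]_(i < p)
    (if (i < l)%N then fine (h i x0 z) else `|fine (h i x0 z)|).

Lemma viol_ge0 x0 z : 0 <= viol x0 z.
Proof. by rewrite /viol bigmax_idl le_max lexx. Qed.

Lemma viol_geI x0 z (i : 'I_p) : (i < l)%N -> fine (h i x0 z) <= viol x0 z.
Proof.
move=> il; apply: le_trans (le_bigmax _ _ i); by rewrite il.
Qed.

Lemma viol_geJ x0 z (i : 'I_p) : (l <= i)%N -> `|fine (h i x0 z)| <= viol x0 z.
Proof.
move=> il; apply: le_trans (le_bigmax _ _ i); by rewrite ltnNge il.
Qed.

Lemma comb_eq (y0 nu0 : 'rV[R]_m) (t : R) :
  y0 + t *: (nu0 - y0) = t *: nu0 + (1 - t) *: y0.
Proof. by rewrite scalerBr scalerBl scale1r addrCA addrC -!addrA [- _ + _]addrC. Qed.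

Lemma key (M : R) x0 y0 nu0 lam :
  (forall z i, h i x0 z \is a fin_num) -> Gam l h x0 y0 ->
  (forall i : 'I_p, (i < l)%N -> econvex (h i x0)) ->
  (forall i : 'I_p, (l <= i)%N -> eaffine (h i x0)) ->
  LamM l h M nu0 x0 y0 lam ->
  (forall i, differentiable (fun z => fine (h i x0 z)) y0) ->
  enorm (y0 - nu0) <= M * viol x0 nu0.
Proof.
move=> fin Gy cvx aff [[Leq Lsign] Lsum] dif.
set g := fun i z => fine (h i x0 z).
have hE : forall i z, h i x0 z = (g i z)%:E by move=> i z; rewrite fineK.
set d := nu0 - y0.
have e_eq : enorm (y0 - nu0) = \sum_(i < p) lam i * 'd (g i) y0 d.
  have := congr1 (fun w => dotv w d) Leq; rewrite /= dotv0l dotvDl dotv_suml.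
  rewrite /d -(opprB y0 nu0) dotvNr dot_unit => /eqP; rewrite addrC addr_eq0 opprK => /eqP <-.
  apply: eq_bigr => i _; rewrite dotvZl grad_dot //.
rewrite e_eq.
have term : forall i : 'I_p, lam i * 'd (g i) y0 d <= `|lam i| * viol x0 nu0.
  move=> i; have [il|li] := ltnP i l.
  - have [lam0 comp] := Lsign i il.
    have gy0 : lam i * g i y0 = 0.
      by move: comp; rewrite hE -EFinM => -[].
    have dle : 'd (g i) y0 d <= g i nu0 - g i y0.
      apply: diff_dir_le; first exact: dif.
      move=> t /andP[t0 t1].
      have := cvx i il nu0 y0 t (g i nu0) (g i y0).
      rewrite (ltW t0) (ltW t1) !hE !lee_fin => /(_ isT (lexx _) (lexx _)).
      rewrite -comb_eq => /le_trans; apply.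
      by rewrite /g le_eqVlt; apply/orP; left; apply/eqP; ring.
    rewrite ger0_norm //.
    apply: le_trans (ler_wpM2l lam0 dle) _.
    rewrite mulrBr gy0 subr0; apply: ler_wpM2l => //.
    exact: viol_geI.
  - have [a [b affE]] := aff i li.
    have gE : forall z, g i z = dotv a z + b by move=> z; rewrite /g affE.
    have gy0 : g i y0 = 0 by have [_ /(_ li)] := Gy i; rewrite hE => -[].
    have comb : forall t, g i (y0 + t *: d) = g i y0 + t * (g i nu0 - g i y0).
      by move=> t; rewrite !gE dotvDr dotvZr /d dotvDr dotvNr; ring.
    have deq : 'd (g i) y0 d = g i nu0 - g i y0.
      apply/eqP; rewrite eq_le; apply/andP; split.
      + by apply: diff_dir_le; [exact: dif| move=> t _; rewrite comb].
      + by apply: diff_dir_ge; [exact: dif| move=> t _; rewrite comb].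
    rewrite deq gy0 subr0.
    apply: le_trans (ler_norm _) _; rewrite normrM.
    by apply: ler_wpM2l => //; exact: viol_geJ.
apply: le_trans (ler_sum _ (fun i _ => term i)) _.
rewrite -mulr_suml; apply: ler_wpM2r => //; exact: viol_ge0.
Qed.
End Key.
Lemma cluster_extract (T : topologicalType) (F : set_system nat) (FF : Filter F)
  (u : nat -> T) (a : T) (P : set nat) (B : set T) :
  cluster (u @ F) a -> F P -> nbhs a B -> exists k, P k /\ B (u k).
Proof.
move=> cl FP nB.
have uF : (u @ F) (u @` P).
  by rewrite /= /fmap /=; apply: filterS FP => k Pk; exists k.
have [_ [[k Pk <-] Bk]] := cl _ _ uF nB.
by exists k.
Qed.

Section Comb.
Variables (R : realType) (m : nat).
Definition zc (a b : 'rV[R]_m) (t : R) : 'rV[R]_m := (1 - t) *: a + t *: b.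

Lemma zc_cont (a b : 'rV[R]_m) : continuous (zc a b).
Proof.
move=> t; apply: cvgD.
  apply: cvgZ; [apply: cvgB; [exact: cvg_cst|exact: cvg_id]|exact: cvg_cst].
apply: cvgZ; [exact: cvg_id|exact: cvg_cst].
Qed.

Lemma zc_cont_r (a : 'rV[R]_m) (t : R) : continuous (fun b => zc a b t).
Proof.
move=> b; rewrite /zc; apply: (cvgD (FF := nbhs_filter b)); first exact: cvg_cst.
apply: cvgZ; [exact: cvg_cst|exact: cvg_id].
Qed.

Lemma zc0 a b : zc a b 0 = a.
Proof. by rewrite /zc subr0 scale1r scale0r addr0. Qed.

Lemma zc1 a b : zc a b 1 = b.
Proof. by rewrite /zc subrr scale0r scale1r add0r. Qed.
End Comb.
Arguments zc {R m}.
Arguments zc_cont {R m}.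
Arguments zc_cont_r {R m}.
Arguments zc0 {R m}.
Arguments zc1 {R m}.

Arguments viol {R n m p} l h x0 z.
Section Main.
Variables (R : realType) (n m p l : nat) (h : 'I_p -> 'rV[R]_n -> 'rV[R]_m -> \bar R).
Variables (xbar : 'rV[R]_n) (ybar : 'rV[R]_m) (x : nat -> 'rV[R]_n) (y : nat -> 'rV[R]_m).
Variable U : set ('rV[R]_n * 'rV[R]_m).
Hypothesis HUo : open U.
Hypothesis HUG : forall z, Gam l h xbar z -> U (xbar, z).
Hypothesis HU : forall q, U q -> forall i : 'I_p,
       h i q.1 q.2 \is a fin_num /\
       {for q, continuous (fun q' : 'rV[R]_n * 'rV[R]_m => fine (h i q'.1 q'.2))} /\
       differentiable (fun z => fine (h i q.1 z)) q.2 /\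
       {for q, continuous (fun q' : 'rV[R]_n * 'rV[R]_m =>
                             gradv (fun z => fine (h i q'.1 z)) q'.2)}.
Hypothesis Hdom : forall x0, domG l h x0 -> forall i : 'I_p,
     (forall z, h i x0 z \is a fin_num) /\ continuous (fun z => fine (h i x0 z)).
Hypothesis Hcvx : forall x0 (i : 'I_p), ((i < l)%N -> econvex (h i x0)) /\
                         ((l <= i)%N -> eaffine (h i x0)).
Hypothesis Hxd : domG l h xbar.
Hypothesis HGy : Gam l h xbar ybar.
Hypothesis Hxk : forall k, domG l h (x k).
Hypothesis xcv : x @ \oo --> xbar.
Hypothesis HGk : forall k, Gam l h (x k) (y k).

Lemma GamE x0 z : domG l h x0 -> (Gam l h x0 z <-> forall i : 'I_p,
  ((i < l)%N -> fine (h i x0 z) <= 0) /\ ((l <= i)%N -> fine (h i x0 z) = 0)).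
Proof.
move=> dx; split => H i; have fi := (Hdom _ dx i).1 z; have [H1 H2] := H i.
- by split => [il|li]; [rewrite -lee_fin fineK // H1 | rewrite (H2 li)].
- split => [il|li]; first by rewrite -(fineK fi) lee_fin H1.
  by rewrite -(fineK fi) (H2 li).
Qed.

Lemma cluster_Gam (F : set_system nat) (FF : ProperFilter F)
  (Ffin : forall P, (\forall k \near \oo, P k) -> F P) yh :
  cluster (y @ F) yh -> Gam l h xbar yh.
Proof.
move=> cl.
set z := zc ybar yh.
have phic : forall i, continuous (fun θ => fine (h i xbar (z θ))).
  move=> i θ; apply: (@continuous_cvg _ _ _ (nbhs θ) (nbhs_filter θ) z (fun w => fine (h i xbar w)) (z θ)).
    exact: ((Hdom _ Hxd i).2 (z θ)).
  exact: zc_cont.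
set C' := [set θ | Gam l h xbar (z θ)].
have C'cl : closed C'.
  move=> θ0 clθ; apply/(GamE _ _ Hxd) => i; split => [il|li].
  - have S_cl : closed [set θ | fine (h i xbar (z θ)) <= 0].
      apply: (@preimage_closed _ _ (fun θ => fine (h i xbar (z θ))) [set r : R | r <= 0]); [by move=> θ _; exact: phic | exact: closed_le].
    apply: S_cl; apply: (closureS _ clθ) => θ /(GamE _ _ Hxd) /(_ i) [+ _].
    by apply.
  - have S_cl : closed [set θ | fine (h i xbar (z θ)) = 0].
      apply: (@preimage_closed _ _ (fun θ => fine (h i xbar (z θ))) [set r : R | r = 0]); [by move=> θ _; exact: phic | exact: closed_eq].
    apply: S_cl; apply: (closureS _ clθ) => θ /(GamE _ _ Hxd) /(_ i) [_].
    by apply.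
set A := `[(0:R), 1]%classic.
have conn := @segment_connected R 0 1.
have key : forall θ, A θ -> U (xbar, z θ) -> Gam l h xbar (z θ).
  move=> θ Aθ Uθ.
  have /andP[θ0 θ1] : (0 <= θ) && (θ <= 1) by move: Aθ; rewrite /A /= in_itv.
  apply/(GamE _ _ Hxd) => i.
  set f := fun q : 'rV[R]_n * 'rV[R]_m => fine (h i q.1 q.2).
  have [_ [cq0 _]] := HU _ Uθ i.
  have [_ [cyb _]] := HU _ (HUG _ HGy) i.
  have ext : forall e, 0 < e -> exists k,
      `|f (xbar, z θ) - f (x k, zc ybar (y k) θ)| < e /\
      `|f (xbar, ybar) - f (x k, ybar)| < e.
    move=> e e0.
    have := @cvgr_dist_lt _ _ _ (nbhs (xbar, z θ)) (nbhs_filter _) f (f (xbar, z θ)) cq0 _ e0.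
    case=> -[Q1 Q2] /= [Q1n Q2n] Qsub.
    have cv2 : (fun k => f (x k, ybar)) @ \oo --> f (xbar, ybar).
      apply: (@continuous_cvg _ _ _ _ _ (fun k => (x k, ybar)) f (xbar, ybar) cyb).
      apply: (@cvg_pair _ _ _ _ _ _ eventually_filter (nbhs_filter xbar) (nbhs_filter ybar)); [exact: xcv | exact: cvg_cst].
    have ev2 := @cvgr_dist_lt _ _ _ _ eventually_filter _ _ cv2 _ e0.
    have FP : F (fun k => Q1 (x k) /\ `|f (xbar, ybar) - f (x k, ybar)| < e).
      apply: Ffin; apply: filterI ev2; exact: xcv.
    have nB : nbhs yh [set v | Q2 (zc ybar v θ)].
      exact: (zc_cont_r ybar θ yh).
    have [k [[Q1k dk] Bk]] := @cluster_extract _ _ _ y yh _ _ cl FP nB.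
    exists k; split => //.
    by apply: (Qsub (x k, zc ybar (y k) θ)).
  have fink : forall k w, h i (x k) w = (f (x k, w))%:E.
    by move=> k w; rewrite /f /= fineK //; exact: ((Hdom _ (Hxk k) i).1 w).
  have [Gyb1 Gyb2] := (GamE _ _ Hxd).1 HGy i.
  split => [il|li].
  - apply/ler_addgt0Pr => e e0; rewrite add0r.
    have [k [d1 d2]] := ext (e / 2) (divr_gt0 e0 (ltr0Sn _ 1)).
    have [Gk1 _] := (GamE _ _ (Hxk k)).1 (HGk k) i.
    have cv := (Hcvx (x k) i).1 il ybar (y k) (1 - θ) (f (x k, ybar)) (f (x k, y k)).
    have t01 : 0 <= 1 - θ <= 1 by apply/andP; split; [rewrite subr_ge0 | rewrite lerBlDr lerDl].
    move: cv; rewrite t01 !fink !lee_fin !lexx => /(_ isT isT isT).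
    have -> : 1 - (1 - θ) = θ by ring.
    rewrite -/(zc ybar (y k) θ) => cvk.
    have a1 := Gk1 il; have a2 := Gyb1 il.
    have b1 : (1 - θ) * f (x k, ybar) <= (1 - θ) * (e / 2).
      apply: ler_wpM2l; first by rewrite subr_ge0.
      move: d2; rewrite /f /= in a2 *.
      rewrite distrC; move/(le_lt_trans (ler_norm _)) => H; lra.
    have b2 : θ * f (x k, y k) <= 0 by apply: mulr_ge0_le0.
    have b3 : (1 - θ) * (e / 2) <= e / 2 by apply: ler_piMl; lra.
    have b4 := le_lt_trans (ler_norm _) d1.
    rewrite /f /= in b1 b2 b3 b4 cvk *; lra.
  - apply/eqP; rewrite -normr_le0; apply/ler_addgt0Pr => e e0; rewrite add0r.
    have [k [d1 d2]] := ext (e / 2) (divr_gt0 e0 (ltr0Sn _ 1)).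
    have [_ Gk2] := (GamE _ _ (Hxk k)).1 (HGk k) i.
    have [a0 [b0 affE]] := (Hcvx (x k) i).2 li.
    have fa : forall w, f (x k, w) = dotv a0 w + b0 by move=> w; rewrite /f /= affE.
    have fz : f (x k, zc ybar (y k) θ) = (1 - θ) * f (x k, ybar) + θ * f (x k, y k).
      rewrite !fa /zc dotvDr !dotvZr; ring.
    move: d1 d2; rewrite fz /f /= (Gk2 li) (Gyb2 li) mulr0 addr0 sub0r normrN => d1 d2.
    set a := fine (h i (x k) ybar) in d1 d2 *.
    have b1 : `|(1 - θ) * a| <= e / 2.
      rewrite normrM ger0_norm ?subr_ge0 //.
      apply: le_trans (ltW d2); apply: ler_piMl => //; lra.
    have tri := ler_normD (fine (h i xbar (z θ)) - (1 - θ) * a) ((1 - θ) * a).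
    rewrite subrK in tri.
    lra.
have BA : [set θ | A θ /\ C' θ] = A.
  apply: conn.
  - exists 0; split; first by rewrite /A /= in_itv /= lexx ler01.
    by rewrite /C' /z /= zc0.
  - exists [set θ | U (xbar, z θ)].
      apply: open_comp => // θ _; apply: (cvg_pair (FF := nbhs_filter θ) (FG := nbhs_filter xbar) (FH := nbhs_filter (z θ))); [exact: cvg_cst | exact: zc_cont].
    rewrite eqEsubset; split => θ [Aθ Cθ]; split => //; [exact: HUG | exact: key].
  - by exists C'.
have : A 1 by rewrite /A /= in_itv /= ler01 lexx.
by rewrite -BA => -[_]; rewrite /C' /z /= zc1.
Qed.

Variables (nu : nat -> 'rV[R]_m) (M : R).
Hypothesis HM : 0 < M.
Hypothesis nucv : nu @ \oo --> ybar.
Hypothesis HLam : \forall k \near \oo, LamM l h M (nu k) (x k) (y k) !=set0.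

Lemma viol_cvg e : 0 < e -> \forall k \near \oo, viol l h (x k) (nu k) <= e.
Proof.
move=> e0.
have H : forall i : 'I_p, \forall k \near \oo,
    (if (i < l)%N then fine (h i (x k) (nu k)) else `|fine (h i (x k) (nu k))|) <= e.
  move=> i.
  have [_ [cyb _]] := HU _ (HUG _ HGy) i.
  set f := fun q : 'rV[R]_n * 'rV[R]_m => fine (h i q.1 q.2) in cyb.
  have cv2 : (fun k => f (x k, nu k)) @ \oo --> f (xbar, ybar).
    apply: (@continuous_cvg _ _ _ _ _ (fun k => (x k, nu k)) f (xbar, ybar) cyb).
    apply: (@cvg_pair _ _ _ _ _ _ eventually_filter (nbhs_filter xbar) (nbhs_filter ybar)); [exact: xcv | exact: nucv].
  have ev2 := @cvgr_dist_lt _ _ _ _ eventually_filter _ _ cv2 _ e0.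
  have [Gyb1 Gyb2] := (GamE _ _ Hxd).1 HGy i.
  apply: filterS ev2 => k; rewrite /f /=.
  case: ltnP => [il|li] Hk.
  - have := Gyb1 il; rewrite distrC in Hk.
    move: Hk => /(le_lt_trans (ler_norm _)) Hk; lra.
  - by move: Hk; rewrite (Gyb2 li) sub0r normrN => /ltW.
have := filter_forall eventually_filter H.
apply: filterS => k Hk.
rewrite /viol; apply: bigmax_le; first exact: ltW.
by move=> i _; exact: Hk.
Qed.

Lemma cluster_eq (F : set_system nat) (FF : ProperFilter F)
  (Ffin : forall P, (\forall k \near \oo, P k) -> F P) yh :
  cluster (y @ F) yh -> Gam l h xbar yh -> yh = ybar.
Proof.
move=> cl Gyh.
have := HUo _ (HUG _ Gyh); case=> -[Q1 Q2] /= [Q1n Q2n] Qsub.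
apply/eqP; rewrite -subr_eq0 -normr_le0; apply/ler_addgt0Pr => e e0; rewrite add0r.
set c := e / (M + 2).
have M2 : 0 < M + 2 by apply: addr_gt0 HM (ltr0Sn _ 1).
have c0 : 0 < c by apply: divr_gt0.
have ce : (M + 2) * c = e by rewrite /c mulrC mulfVK //; apply: lt0r_neq0.
have ev1 := viol_cvg _ c0.
have ev2 := @cvgr_dist_lt _ _ _ _ eventually_filter _ _ nucv _ c0.
have ev3 : \forall k \near \oo, Q1 (x k) := xcv _ Q1n.
have FP : F (fun k => [/\ viol l h (x k) (nu k) <= c, `|ybar - nu k| < c, Q1 (x k)
                       & LamM l h M (nu k) (x k) (y k) !=set0]).
  apply: Ffin; apply: filterS (filterI ev1 (filterI ev2 (filterI ev3 HLam))).
  by move=> k [? [? [? ?]]]; split.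
have nB : nbhs yh [set v | Q2 v /\ `|yh - v| < c].
  apply: (@filterI _ _ (nbhs_filter yh) _ _ Q2n).
  exact: (@cvgr_dist_lt _ _ _ (nbhs yh) (nbhs_filter yh) id yh cvg_id _ c0).
have [k [[v1 v2 v3 [lam Hlam]] [Q2k d1]]] := @cluster_extract _ _ _ y yh _ _ cl FP nB.
have Uk : U (x k, y k) by apply: Qsub.
have kk := @key R n m p l h M (x k) (y k) (nu k) lam (fun z i => (Hdom _ (Hxk k) i).1 z)
  (HGk k) (fun i => (Hcvx (x k) i).1) (fun i => (Hcvx (x k) i).2) Hlam
  (fun i => (HU _ Uk i).2.2.1).
have n1 := @norm_le_enorm R m (y k - nu k).
have vM : M * viol l h (x k) (nu k) <= M * c by apply: ler_wpM2l; [exact: ltW | exact: v1].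
have eqd : yh - ybar = (yh - y k) + (y k - nu k) - (ybar - nu k).
  by rewrite addrA subrK opprB addrA subrK.
have t1 := ler_normB ((yh - y k) + (y k - nu k)) (ybar - nu k).
have t2 := ler_normD (yh - y k) (y k - nu k).
rewrite -eqd in t1.
have : `|yh - ybar| <= (M + 2) * c.
  apply: (le_trans t1); rewrite mulrDl; lra.
by rewrite ce.
Qed.
End Main.
Theorem lemma3p1 (R : realType) (n m p l : nat)
  (h : 'I_p -> 'rV[R]_n -> 'rV[R]_m -> \bar R)
  (xbar : 'rV[R]_n) (ybar : 'rV[R]_m) (M : R)
  (x : nat -> 'rV[R]_n) (nu y : nat -> 'rV[R]_m) :
  (l <= p)%N ->
  domG l h xbar -> Gam l h xbar ybar ->
  (* continuity and continuous differentiability in y near {xbar} x Gamma(xbar) *)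
  (exists U : set ('rV[R]_n * 'rV[R]_m),
     open U /\ (forall z, Gam l h xbar z -> U (xbar, z)) /\
     forall q, U q -> forall i : 'I_p,
       h i q.1 q.2 \is a fin_num /\
       {for q, continuous (fun q' : 'rV[R]_n * 'rV[R]_m => fine (h i q'.1 q'.2))} /\
       differentiable (fun z => fine (h i q.1 z)) q.2 /\
       {for q, continuous (fun q' : 'rV[R]_n * 'rV[R]_m =>
                             gradv (fun z => fine (h i q'.1 z)) q'.2)}) ->
  (* h_i(x, .) : R^m -> R is real-valued and continuous for x in dom Gamma *)
  (forall x0, domG l h x0 -> forall i : 'I_p,
     (forall z, h i x0 z \is a fin_num) /\ continuous (fun z => fine (h i x0 z))) ->
  (* (A1) *)
  (forall x0 (i : 'I_p), ((i < l)%N -> econvex (h i x0)) /\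
                         ((l <= i)%N -> eaffine (h i x0))) ->
  (* (A2) Gamma locally bounded at xbar *)
  (exists r : R, \forall x0 \near xbar, Gam l h x0 `<=` [set z | enorm z <= r]) ->
  0 < M ->
  (forall k, domG l h (x k)) ->
  x @ \oo --> xbar ->
  nu @ \oo --> ybar ->
  (forall k, ~ Gam l h (x k) (nu k)) ->
  (forall k, in_proj (y k) (nu k) (Gam l h (x k))) ->
  (\forall k \near \oo, LamM l h M (nu k) (x k) (y k) !=set0) ->
  y @ \oo --> ybar /\
  \forall k \near \oo,
    dist_set (nu k) (Gam l h (x k)) <=
    M * \big[Num.max/0]_(i < p)
          (if (i < l)%N then fine (h i (x k) (nu k))
           else `|fine (h i (x k) (nu k))|).
Proof.
move=> lp Hxd HGy [U [HUo [HUG HU]]] Hdom Hcvx [r Hr] HM Hxk xcv nucv Hnot Hproj HLam.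
have HGk : forall k, Gam l h (x k) (y k) by move=> k; exact: (Hproj k).1.
have ycv : y @ \oo --> ybar.
  apply: contrapT => ncv.
  have [N [Nn nev]] : exists N, nbhs ybar N /\ ~ (\forall k \near \oo, N (y k)).
    apply: contrapT => H; apply: ncv => N Nn; apply: contrapT => nev.
    by apply: H; exists N.
  pose F := within [set k | ~ N (y k)] (eventually : set_system nat).
  have FF : ProperFilter F.
    apply: Build_ProperFilter_ex.
    move=> P FP; move: FP; rewrite /F /within /= => FP; apply: contrapT => nP; apply: nev.
    apply: filterS FP => k H; apply: contrapT => nN.
    by apply: nP; exists k; exact: H.
  have Ffin : forall P, (\forall k \near \oo, P k) -> F P.
    by move=> P HP; apply: filterS HP => k Pk _.
  set K := [set v : 'rV[R]_m | forall i, `[- r, r]%classic (v ord0 i)].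
  have Kc : compact K.
    exact: (@rV_compact _ _ (fun _ => `[- r, r]%classic) (fun _ => @segment_compact R _ _)).
  have FK : (y @ F) K.
    apply: Ffin; have H := xcv _ Hr; apply: (@filterS _ _ eventually_filter _ _ _ H) => k Hk i.
    have := le_trans (@coord_le_enorm R m (y k) i) (Hk _ (HGk k)).
    by rewrite /= in_itv /= -ler_norml.
  have [yh [_ clyh]] := Kc _ _ FK.
  have Gyh := @cluster_Gam R n m p l h xbar ybar x y U HUo HUG HU Hdom Hcvx Hxd HGy Hxk xcv HGk F FF Ffin yh clyh.
  have eq := @cluster_eq R n m p l h xbar ybar x y U HUo HUG HU Hdom Hcvx Hxd HGy Hxk xcv HGk nu M HM nucv HLam F FF Ffin yh clyh Gyh.
  subst yh.
  have FnN : F (fun k => ~ N (y k)) by exact: withinT.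
  have [k [nk Nk]] := @cluster_extract _ _ _ y ybar _ _ clyh FnN Nn.
  exact: nk Nk.
split => //.
have Uyb := HUG _ HGy.
have evU : \forall k \near \oo, U (x k, y k).
  have cvp : (x k, y k) @[k --> \oo] --> (xbar, ybar).
    apply: (@cvg_pair _ _ _ _ _ _ eventually_filter (nbhs_filter xbar) (nbhs_filter ybar)); [exact: xcv | exact: ycv].
  exact: cvp _ (HUo _ Uyb).
apply: filterS (filterI evU HLam) => k [Uk [lam Hlam]].
have lb : has_lbound [set enorm (z - nu k) | z in Gam l h (x k)].
  by exists 0 => w [z _ <-]; exact: enorm_ge0.
have d1 : dist_set (nu k) (Gam l h (x k)) <= enorm (y k - nu k).
  by apply: (ge_inf lb); exists (y k) => //; exact: HGk.
apply: (le_trans d1).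
exact: (@key R n m p l h M (x k) (y k) (nu k) lam (fun z i => (Hdom _ (Hxk k) i).1 z)
  (HGk k) (fun i => (Hcvx (x k) i).1) (fun i => (Hcvx (x k) i).2) Hlam
  (fun i => (HU _ Uk i).2.2.1)).
Qed.
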